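(* Let $\lambda=\lambda_1 f_1+\lambda_2 f_2$ be the highest weight of a non-trivial irreducible representation of $SU_3$ (with $f_1,f_2$ the fundamental weights and $\lambda_1,\lambda_2\in\mathbb{Z}_{\ge0}$), and assume $\lambda$ lies on the border of the Weyl chamber, i.e. $\lambda=(\lambda_1,0)$ or $\lambda=(0,\lambda_2)$, with $\lambda\ne(0,0)$. Let $T=\mathrm{diag}(1,0,-1)\in\mathfrak{sl}_3(\mathbb{C})$, and for $m\in\mathbb{N}$ let $\rho_{m\lambda}$ denote the irreducible representation of $SU_3$ (and of $\mathfrak{sl}_3(\mathbb{C})$) with highest weight $m\lambda$. Then the nearest neighbour distributions $\mu_{\rho_{m\lambda}(T)}$ converge to the Dirac measure $\delta_0$ as $m\to\infty$, in the Kolmogorov–Smirnov distance.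
   Context: For an $N\times N$ hermitian matrix $A$ with eigenvalues (with multiplicity) $x_1\le\dots\le x_N$, its nearest neighbour distribution is $\mu_A=\frac1N\sum_{j=1}^{N-1}\delta_{\frac{N}{x_N-x_1}(x_{j+1}-x_j)}$ if $x_1\ne x_N$, and $\mu_A=\frac{N-1}{N}\delta_0$ if all eigenvalues coincide. The Kolmogorov–Smirnov distance between finite Borel measures $\mu,\nu$ on $\mathbb{R}_{\ge0}$ is $\sup_{x\ge0}|\int_0^x d\mu-\int_0^x d\nu|$. Since $T\in i\,\mathfrak{su}_3$, $\rho_{m\lambda}(T)$ is hermitian. *)

(* Defs.v *)
From HB Require Import structures.
From mathcomp Require Import all_boot all_order all_algebra.
From mathcomp Require Import complex.
From mathcomp Require Import boolp classical_sets reals topology normedtype.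
Set Implicit Arguments. Unset Strict Implicit. Unset Printing Implicit Defensive.
Import Order.TTheory GRing.Theory Num.Theory.
Local Open Scope ring_scope.
Local Open Scope classical_set_scope.

Section Defs.
Variable R : realType.
Local Notation C := (complex R).

Definition rc (x : R) : C := Complex x 0.

Definition E3 (i j : 'I_3) : 'M[C]_3 := delta_mx i j.
Definition H1 : 'M[C]_3 := E3 0 0 - E3 1 1.
Definition H2 : 'M[C]_3 := E3 1 1 - E3 2%:R 2%:R.
Definition Tmx : 'M[C]_3 := E3 0 0 - E3 2%:R 2%:R.

Definition lie_br (n : nat) (X Y : 'M[C]_n) : 'M[C]_n := X *m Y - Y *m X.

(* rho : gl_3(C) -> gl_d(C) restricts to a Lie algebra representation of sl_3(C)
   on C^d (column vectors); rho is taken linear on all of 'M_3 (w.l.o.g.). *)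
Definition sl3_rep (d : nat) (rho : 'M[C]_3 -> 'M[C]_d) : Prop :=
  (forall (a : C) (X Y : 'M[C]_3), rho (a *: X + Y) = a *: rho X + rho Y) /\
  (forall X Y : 'M[C]_3, \tr X = 0 -> \tr Y = 0 ->
      rho (lie_br X Y) = lie_br (rho X) (rho Y)).

(* A subspace of column vectors is encoded by the row space of U^T, i.e. by U
   whose rows u span it; invariance under A means u *m A^T stays in it. *)
Definition sl3_irreducible (d : nat) (rho : 'M[C]_3 -> 'M[C]_d) : Prop :=
  (0 < d)%N /\
  forall U : 'M[C]_d,
    (forall X : 'M[C]_3, \tr X = 0 -> (U *m (rho X)^T <= U)%MS) ->
    \rank U = 0%N \/ \rank U = d.

Definition highest_weight_vector (d : nat) (rho : 'M[C]_3 -> 'M[C]_d)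
    (l1 l2 : nat) (v : 'cV[C]_d) : Prop :=
  v != 0 /\
  rho (E3 0 1) *m v = 0 /\ rho (E3 1 2%:R) *m v = 0 /\
  rho H1 *m v = l1%:R *: v /\ rho H2 *m v = l2%:R *: v.

Definition irrep_hw (d : nat) (rho : 'M[C]_3 -> 'M[C]_d) (l1 l2 : nat) : Prop :=
  sl3_rep rho /\ sl3_irreducible rho /\
  exists v, highest_weight_vector rho l1 l2 v.

Definition real_eigenvalue_list (d : nat) (A : 'M[C]_d) (s : seq R) : Prop :=
  sorted <=%R s /\ char_poly A = \prod_(x <- s) ('X - (rc x)%:P).

(* the sorted eigenvalue list of A (unique when it exists; [::] otherwise) *)
Definition eigs (d : nat) (A : 'M[C]_d) : seq R :=
  match pselect (exists s, real_eigenvalue_list A s) with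
  | left h => proj1_sig (cid h)
  | right _ => [::]
  end.

(* x |-> \int_0^x d mu_A, where mu_A is the nearest neighbour distribution
   of a matrix with sorted eigenvalues s = [x_1 <= ... <= x_N] *)
Definition nnd_cdf (s : seq R) (x : R) : R :=
  let N := size s in
  let lo := head 0 s in
  let hi := last 0 s in
  if lo != hi then
    (\sum_(0 <= j < N.-1)
        (if (N%:R / (hi - lo) * (nth 0 s j.+1 - nth 0 s j) <= x :> R) then 1 else 0 : R))
      / N%:R
  else if 0 <= x then (N%:R - 1) / N%:R else 0.

Definition dirac0_cdf (x : R) : R := if 0 <= x then 1 else 0.

(* Kolmogorov-Smirnov distance between two measures on R_{>=0},
   given through x |-> \int_0^x *)
Definition ks_dist (F G : R -> R) : R :=
  sup [set `|F x - G x| | x in [set x : R | 0 <= x]].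

End Defs.

(* Main.v *)
Require Import Defs.
From HB Require Import structures.
From mathcomp Require Import all_boot all_order all_algebra.
From mathcomp Require Import complex.
From mathcomp Require Import boolp classical_sets reals topology normedtype.
From mathcomp Require Import sequences ring lra zify.
From Stdlib Require Import Lia.
Import numFieldTopology.Exports numFieldNormedType.Exports.
Import Order.TTheory GRing.Theory Num.Theory.
Local Open Scope ring_scope.
Local Open Scope classical_set_scope.
Set Implicit Arguments. Unset Strict Implicit. Unset Printing Implicit Defensive.
Lemma natC_inj (R : realType) (a b : nat) : (a%:R = b%:R :> R[i]) -> a = b.
Proof. by move/eqP; rewrite eqr_nat => /eqP. Qed.

Lemma char_poly_tr (F : fieldType) (k : nat) (A : 'M[F]_k) : char_poly A^T = char_poly A.
Proof.
rewrite /char_poly -det_tr; congr (\det _).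
by apply/matrixP => i j; rewrite !mxE eq_sym.
Qed.

Lemma rcE (R : realType) (x : R) : rc x = real_complex R x.
Proof. by []. Qed.
Section RowAlg.
Variables (F : numFieldType) (d : nat).
Implicit Types (x u : 'rV[F]_d) (e f h M N : 'M[F]_d).

Definition itr f k x := iter k (fun y => y *m f) x.

Lemma itrS f k x : itr f k.+1 x = itr f k x *m f.
Proof. by []. Qed.

Lemma itr0x f k : itr f k 0 = 0.
Proof. by elim: k => // k IH; rewrite itrS IH mul0mx. Qed.

Lemma shift_eig f M x (mu delta : F) : x *m M = mu *: x ->
  f *m M - M *m f = delta *: f ->
  forall k, itr f k x *m M = (mu + k%:R * delta) *: itr f k x.
Proof.
move=> hx /eqP; rewrite subr_eq => /eqP hf.
elim=> [|k IH]; first by rewrite /= mul0r addr0.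
rewrite itrS -mulmxA hf mulmxDr -scalemxAr mulmxA IH -scalemxAl -scalerDl.
by congr (_ *: _); rewrite mulrSr; ring.
Qed.

Lemma ladder e f h x (lam : F) : f *m e - e *m f = h ->
  f *m h - h *m f = -(2%:R) *: f -> x *m e = 0 -> x *m h = lam *: x ->
  forall k, itr f k.+1 x *m e = (k.+1%:R * (lam - k%:R)) *: itr f k x.
Proof.
move=> /eqP; rewrite subr_eq => /eqP hfe hfh xe xh.
have sh := shift_eig xh hfh.
elim=> [|k IH].
  rewrite itrS -mulmxA hfe mulmxDr /= xh mulmxA xe mul0mx addr0.
  by rewrite mul1r subr0.
rewrite itrS -mulmxA hfe mulmxDr mulmxA IH -scalemxAl sh -scalerDl.
by congr (_ *: _); rewrite !mulrSr; ring.
Qed.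

Lemma ladder_nz e f h x (n : nat) : f *m e - e *m f = h ->
  f *m h - h *m f = -(2%:R) *: f -> x *m e = 0 -> x *m h = n%:R *: x ->
  x != 0 -> forall k, (k <= n)%N -> itr f k x != 0.
Proof.
move=> hfe hfh xe xh xnz; elim=> // k IH hk.
apply/negP => /eqP h0.
have := ladder hfe hfh xe xh k; rewrite h0 mul0mx => /esym /eqP.
rewrite scaler_eq0 (negbTE (IH (ltnW hk))) orbF mulf_eq0 pnatr_eq0 /=.
by rewrite subr_eq0 eqr_nat; move/eqP => ek; rewrite ek ltnn in hk.
Qed.

Lemma kill e f N x (c : F) : x *m e = 0 -> (forall k, itr f k x *m N = 0) ->
  f *m e - e *m f = c *: N -> forall k, itr f k x *m e = 0.
Proof.
move=> xe hN /eqP; rewrite subr_eq => /eqP hf.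
elim=> // k IH; rewrite itrS -mulmxA hf mulmxDr -scalemxAr hN scaler0 add0r.
by rewrite mulmxA IH mul0mx.
Qed.

Lemma last_true (P : nat -> bool) K : P 0 -> ~~ P K -> exists j, P j /\ ~~ P j.+1.
Proof.
move=> P0; elim: K => [|K IH]; first by rewrite P0.
by case hK: (P K) => hK1; [exists K | apply: IH; rewrite hK].
Qed.

End RowAlg.
Section Dim.
Variable R : realType.
Local Notation C := (R[i]).
Variable d : nat.

Lemma half_add (n : nat) : (n./2 + n./2 <= n)%N.
Proof. by rewrite addnn -{2}(odd_double_half n) leq_addl. Qed.

Lemma dimlb (e f h h' ea e3 f3 t : 'M[C]_d) (cc : C) (w : 'rV[C]_d) (n : nat) :
  f *m e - e *m f = 1 *: h ->
  f *m h - h *m f = -(2%:R) *: f ->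
  f *m h' - h' *m f = 1 *: f ->
  f *m t - t *m f = -1 *: f ->
  f *m ea - ea *m f = 0 *: ea ->
  f *m e3 - e3 *m f = cc *: ea ->
  f3 *m e3 - e3 *m f3 = t ->
  f3 *m t - t *m f3 = -(2%:R) *: f3 ->
  f3 *m h - h *m f3 = -1 *: f3 ->
  f3 *m h' - h' *m f3 = -1 *: f3 ->
  w != 0 -> w *m e = 0 -> w *m ea = 0 -> w *m e3 = 0 ->
  w *m h = n%:R *: w -> w *m h' = 0 *: w -> w *m t = n%:R *: w ->
  ((n./2).+1 * (n./2).+1 <= d)%N.
Proof.
move=> hfe hfh hfh' hft hfea hfe3 hf3e3 hf3t hf3h hf3h' wnz we wea we3 wh wh' wt.
rewrite scale1r in hfe.
set q := (n./2).+1.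
pose u a := itr f a w.
have u_nz a : (a <= n)%N -> u a != 0 := fun ha => ladder_nz hfe hfh we wh wnz ha.
have hfea' : f *m ea - ea *m f = 0 *: (0 : 'M[C]_d) by rewrite hfea !scale0r.
have u_ea : forall a, u a *m ea = 0.
  by apply: (kill wea _ hfea') => k; rewrite mulmx0.
have u_e3 a : u a *m e3 = 0 := kill we3 u_ea hfe3 a.
have u_t a : (a <= n)%N -> u a *m t = (n - a)%N%:R *: u a.
  move=> ha; rewrite (shift_eig wt hft a) natrB //; congr (_ *: _); ring.
pose x a k := itr f3 k (u a).
have x_nz a k : (a + k <= n)%N -> x a k != 0.
  move=> hak; have ha : (a <= n)%N by lia.
  apply: (ladder_nz hf3e3 hf3t (u_e3 a) (u_t a ha) (u_nz a ha)); lia.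
have x_h a k : x a k *m h = ((n%:R + a%:R * -(2%:R)) + k%:R * -1) *: x a k.
  exact: shift_eig (shift_eig wh hfh a) hf3h k.
have x_h' a k : x a k *m h' = ((0 + a%:R * 1) + k%:R * -1) *: x a k.
  exact: shift_eig (shift_eig wh' hfh' a) hf3h' k.
pose al : C := - (q%:R + 1).
pose g := al *: h + (3%:R + 2%:R * al) *: h'.
pose ev (p : 'I_q * 'I_q) : C := al * n%:R + (3 * (p.1 + q * p.2))%N%:R.
have x_g (p : 'I_q * 'I_q) : (x p.1 p.2 <= eigenspace g (ev p))%MS.
  apply/eigenspaceP; rewrite /g mulmxDr -!scalemxAr x_h x_h' !scalerA -scalerDl.
  congr (_ *: _); rewrite /ev /al /q !natrD !natrM -!natr1; ring.
have inj : {in predT &, injective ev}.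
  move=> [a b] [a' b'] _ _; rewrite /ev /= => /addrI /natC_inj eq1.
  have e' : (a + q * b = a' + q * b')%N by lia.
  have hb : b = b' :> nat.
    have key : forall a0 b0 : nat, (a0 < q)%N -> ((a0 + q * b0) %/ q)%N = b0.
      by move=> a0 b0 h0; rewrite addnC mulnC divnMDl // divn_small // addn0.
    by rewrite -(key a b (ltn_ord a)) e' key.
  have ha : a = a' :> nat by move: e'; rewrite hb => /addIn.
  by congr pair; apply: val_inj.
have dx := mxdirect_sum_eigenspace g inj.
move/mxdirectP: dx => /= hr.
have -> : (q * q = \sum_(j : 'I_q * 'I_q) 1)%N.
  by rewrite sum1_card card_prod !card_ord.
apply: leq_trans (rank_leq_col (\sum_j eigenspace g (ev j))%MS); rewrite hr.
apply: leq_sum => [[a b]] _; rewrite lt0n mxrank_eq0.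
have hab : (a + b <= n)%N.
  have := half_add n; have := ltn_ord a; have := ltn_ord b; rewrite /q.
  by move=> hb ha hn; apply: leq_trans hn; apply: leq_add; rewrite -ltnS.
apply: contraNneq (x_nz _ _ hab) => E0; move: (x_g (a, b)); rewrite E0 submx0 /=.
by [].
Qed.
End Dim.
Section KS.
Variable R : realType.

Lemma ks_le (F : R -> R) (Bd : R) : (forall x, 0 <= x -> 0 <= 1 - F x <= Bd) ->
  0 <= ks_dist F (@dirac0_cdf R) <= Bd.
Proof.
move=> hF.
have hE : forall y, [set `|F x - dirac0_cdf x| | x in [set x : R | 0 <= x]] y ->
    0 <= y <= Bd.
  move=> y [x /= x0 <-]; rewrite /dirac0_cdf x0 distrC.
  have /andP [h1 h2] := hF x x0; rewrite ger0_norm //; exact/andP.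
have ne : [set `|F x - dirac0_cdf x| | x in [set x : R | 0 <= x]] !=set0.
  by exists (`|F 0 - dirac0_cdf 0|); exists 0 => /=.
apply/andP; split.
  have [y hy] := ne; have /andP [y0 _] := hE y hy; apply: le_trans y0 _.
  apply: sup_upper_bound => //; split => //.
  by exists Bd => z hz; have /andP [] := hE z hz.
by apply: ge_sup => // z hz; have /andP [] := hE z hz.
Qed.

Lemma nnd_bound (s : seq R) (n : nat) : sorted <=%R s -> (0 < size s)%N ->
  (forall x, x \in s -> exists i, (i <= 2 * n)%N /\ x = n%:R - i%:R) ->
  forall x, 0 <= x -> 0 <= 1 - nnd_cdf s x <= (2 * n + 1)%:R / (size s)%:R.
Proof.
move=> ss sz0 hs x x0; rewrite /nnd_cdf.
set N := size s.
have N0 : (0 : R) < N%:R by rewrite ltr0n.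
case: ifP => hlohi; last first.
  rewrite x0 /=; have -> : 1 - (N%:R - 1) / N%:R = 1 / N%:R :> R.
    by field; rewrite gt_eqF.
  apply/andP; split; first by rewrite divr_ge0 // ltW.
  by apply: ler_wpM2r; [rewrite invr_ge0 ler0n | rewrite ler1n addn1].
set lo := head 0 s; set hi := last 0 s.
pose ind j := (if N%:R / (hi - lo) * (nth 0 s j.+1 - nth 0 s j) <= x then 1 else 0 : R).
set Sg := \sum_(_ <= _ < _) _.
have SgE : Sg = \sum_(0 <= j < N.-1) ind j by [].
have -> : 1 - Sg / N%:R = (N%:R - Sg) / N%:R by field; rewrite gt_eqF.
have nthin j : (j < N)%N -> nth 0 s j \in s by move=> hj; rewrite mem_nth.
have hsort := sortedP 0 ss.
have Sg_le : Sg <= (N.-1)%:R.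
  rewrite SgE -[X in _ <= X%:R](subn0 N.-1) -sumr_const_nat.
  by apply: ler_sum => j _; rewrite /ind; case: ifP.
have ind_ge j : (j < N.-1)%N -> 1 - (nth 0 s j.+1 - nth 0 s j) <= ind j.
  move=> hj; have hj1 : (j.+1 < N)%N by rewrite -ltn_predRL.
  have [i1 [_ e1]] := hs _ (nthin _ hj1).
  have [i0 [_ e0]] := hs _ (nthin _ (ltn_trans (ltnSn j) hj1)).
  have hle := hsort j hj1.
  rewrite /ind; case: (eqVneq (nth 0 s j.+1) (nth 0 s j)) => [-> | hne].
    by rewrite subrr mulr0 x0 subr0.
  rewrite e1 e0 in hle hne *.
  have hi10 : (i1 < i0)%N.
    rewrite ltn_neqAle; apply/andP; split.
      by apply: contraNneq hne => ->.
    by rewrite -(ler_nat R) -lerN2 -(lerD2l n%:R).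
  have : (i1 + 1)%:R <= i0%:R :> R by rewrite ler_nat addn1.
  rewrite natrD => h; case: ifP => _; lra.
have tel : \sum_(0 <= j < N.-1) (nth 0 s j.+1 - nth 0 s j) = hi - lo.
  rewrite telescope_sumr // /hi /lo -nth_last -nth0.
  done.
have hilo : hi - lo <= (2 * n)%:R.
  have lastin : forall l : seq R, (0 < size l)%N -> last 0 l \in l.
    by case=> // a l _ /=; exact: mem_last.
  have headin : forall l : seq R, (0 < size l)%N -> head 0 l \in l.
    by case=> // a l _; exact: mem_head.
  have [i1 [_ e1]] := hs hi (lastin _ sz0).
  have [i0 [h0 e0]] := hs lo (headin _ sz0).
  rewrite e1 e0; have : i0%:R <= (2 * n)%:R :> R by rewrite ler_nat.
  have : 0 <= i1%:R :> R by [].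
  lra.
have Sg_ge : (N.-1)%:R - (2 * n)%:R <= Sg.
  apply: le_trans (_ : \sum_(0 <= j < N.-1) (1 - (nth 0 s j.+1 - nth 0 s j)) <= Sg).
    rewrite sumrB tel -[X in X%:R - _ <= _](subn0 N.-1) -sumr_const_nat.
    by rewrite lerD2l lerN2.
  rewrite SgE big_nat [X in _ <= X]big_nat; apply: ler_sum => j /andP [_ hj].
  exact: ind_ge.
have NN : N%:R = (N.-1)%:R + 1 :> R by rewrite natr1 prednK.
apply/andP; split.
  by apply: divr_ge0; [rewrite NN; lra | exact: ltW].
apply: ler_wpM2r; first by rewrite invr_ge0 ler0n.
rewrite NN natrD natrM /=; rewrite natrM in Sg_ge; lra.
Qed.

End KS.
Ltac brc := rewrite /lie_br /H1 /H2 /Tmx /E3 ?mulmxBl ?mulmxBr ?mulmxDl ?mulmxDr ?mul_delta_mx_cond /=;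
  apply/matrixP => -[[|[|[|?]]] ?] -[[|[|[|?]]] ?] //; rewrite !mxE /=; ring.
Ltac trc := rewrite /mxtrace /H1 /H2 /Tmx /E3 !big_ord_recr big_ord0 /= !mxE /=; ring.

Lemma eq_via (K : comRingType) (a b x y : K) : x = y -> a - b = x - y -> a = b.
Proof. by move=> -> /eqP; rewrite subrr subr_eq0 => /eqP. Qed.

Section Rep.
Variable R : realType.
Local Notation C := (R[i]).
Variables (d : nat) (rho : 'M[C]_3 -> 'M[C]_d).
Hypothesis hlin : forall (a : C) (X Y : 'M[C]_3), rho (a *: X + Y) = a *: rho X + rho Y.
Hypothesis hbr : forall X Y : 'M[C]_3, \tr X = 0 -> \tr Y = 0 ->
      rho (lie_br X Y) = lie_br (rho X) (rho Y).

Lemma rho0 : rho 0 = 0.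
Proof. have h := hlin 1 0 0; rewrite !scale1r addr0 in h.
by apply: (addrI (rho 0)); rewrite addr0 -h. Qed.
Lemma rhoD X Y : rho (X + Y) = rho X + rho Y.
Proof. by have := hlin 1 X Y; rewrite !scale1r. Qed.
Lemma rhoZ a X : rho (a *: X) = a *: rho X.
Proof. by have := hlin a X 0; rewrite !addr0 rho0 addr0. Qed.

Definition B X := (rho X)^T.
Lemma BD X Y : B (X + Y) = B X + B Y.
Proof. by rewrite /B rhoD linearD. Qed.
Lemma BZ a X : B (a *: X) = a *: B X.
Proof. by rewrite /B rhoZ linearZ. Qed.
Lemma Bbr X Y Z : \tr X = 0 -> \tr Y = 0 -> lie_br X Y = Z ->
  B Y *m B X - B X *m B Y = B Z.
Proof. by move=> hX hY <-; rewrite /B hbr // /lie_br linearB /= !trmx_mul. Qed.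

Local Notation e1 := (B (E3 R 0 1)).
Local Notation e2 := (B (E3 R 1 2%:R)).
Local Notation e3 := (B (E3 R 0 2%:R)).
Local Notation f1 := (B (E3 R 1 0)).
Local Notation f2 := (B (E3 R 2%:R 1)).
Local Notation f3 := (B (E3 R 2%:R 0)).
Local Notation h1 := (B (H1 R)).
Local Notation h2 := (B (H2 R)).
Local Notation t := (B (Tmx R)).

Ltac rel := apply: Bbr; [trc|trc|brc].
Ltac relZ := rewrite -BZ; rel.

Lemma R1 : f1 *m e1 - e1 *m f1 = 1 *: h1. Proof. relZ. Qed.
Lemma R2 : f2 *m e2 - e2 *m f2 = 1 *: h2. Proof. relZ. Qed.
Lemma R3 : f3 *m e3 - e3 *m f3 = t. Proof. rel. Qed.
Lemma R4 : f1 *m h1 - h1 *m f1 = -(2%:R) *: f1. Proof. relZ. Qed.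
Lemma R5 : f2 *m h2 - h2 *m f2 = -(2%:R) *: f2. Proof. relZ. Qed.
Lemma R6 : f3 *m t - t *m f3 = -(2%:R) *: f3. Proof. relZ. Qed.
Lemma R7 : e3 *m t - t *m e3 = 2%:R *: e3. Proof. relZ. Qed.
Lemma R8 : f1 *m t - t *m f1 = -1 *: f1. Proof. relZ. Qed.
Lemma R9 : f2 *m t - t *m f2 = -1 *: f2. Proof. relZ. Qed.
Lemma R10 : f1 *m h2 - h2 *m f1 = 1 *: f1. Proof. relZ. Qed.
Lemma R11 : f2 *m h1 - h1 *m f2 = 1 *: f2. Proof. relZ. Qed.
Lemma R12 : f3 *m h1 - h1 *m f3 = -1 *: f3. Proof. relZ. Qed.
Lemma R13 : f3 *m h2 - h2 *m f3 = -1 *: f3. Proof. relZ. Qed.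
Lemma R14 : f1 *m e3 - e3 *m f1 = -1 *: e2. Proof. relZ. Qed.
Lemma R15 : f1 *m e2 - e2 *m f1 = 0 *: e2. Proof. relZ. Qed.
Lemma R16 : f2 *m e3 - e3 *m f2 = 1 *: e1. Proof. relZ. Qed.
Lemma R17 : f2 *m e1 - e1 *m f2 = 0 *: e1. Proof. relZ. Qed.
Lemma R19 : e2 *m e1 - e1 *m e2 = e3. Proof. rel. Qed.
Lemma R20 : f1 *m f2 - f2 *m f1 = f3. Proof. rel. Qed.
Lemma Tsum : t = h1 + h2.
Proof. rewrite -BD; congr B; brc. Qed.

Lemma tr3 (X : 'M[C]_3) : \tr X = X 0 0 + X 1 1 + X 2%:R 2%:R.
Proof.
rewrite /mxtrace !big_ord_recr big_ord0 /= add0r.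
by congr (_ + _ + _); apply: congr2; apply: val_inj.
Qed.

Lemma Bdecomp X : \tr X = 0 -> B X =
  X 0 1 *: e1 + X 1 2%:R *: e2 + X 0 2%:R *: e3 + X 1 0 *: f1 + X 2%:R 1 *: f2
  + X 2%:R 0 *: f3 + X 0 0 *: h1 + (X 0 0 + X 1 1) *: h2.
Proof.
rewrite tr3 => trX; rewrite -!BZ -!BD; congr B.
have htr : X 2%:R 2%:R = - X 0 0 - X 1 1.
  by apply: (eq_via trX); ring.
have o0 : forall (h : (0 < 3)%N), Ordinal h = 0 by move=> h; apply: val_inj.
have o1 : forall (h : (1 < 3)%N), Ordinal h = 1 by move=> h; apply: val_inj.
have o2 : forall (h : (2 < 3)%N), Ordinal h = 2%:R by move=> h; apply: val_inj.
apply/matrixP => -[[|[|[|?]]] ?] -[[|[|[|?]]] ?] //; rewrite !mxE /= ?o0 ?o1 ?o2; try ring.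
rewrite htr; ring.
Qed.

Variables (n1 n2 : nat) (v : 'cV[C]_d).
Hypothesis hv : highest_weight_vector rho n1 n2 v.
Hypothesis hirr : sl3_irreducible rho.
Let w := v^T.
Let n := (n1 + n2)%N.
Let c (k : nat) : C := n%:R - k%:R.

Lemma w_nz : w != 0. Proof. by rewrite trmx_eq0; case: hv. Qed.
Lemma we1 : w *m e1 = 0. Proof. by case: hv => _ [h _]; rewrite /w /B -trmx_mul h trmx0. Qed.
Lemma we2 : w *m e2 = 0. Proof. by case: hv => _ [_ [h _]]; rewrite /w /B -trmx_mul h trmx0. Qed.
Lemma wh1 : w *m h1 = n1%:R *: w.
Proof. by case: hv => _ [_ [_ [h _]]]; rewrite /w /B -trmx_mul h linearZ. Qed.
Lemma wh2 : w *m h2 = n2%:R *: w.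
Proof. by case: hv => _ [_ [_ [_ h]]]; rewrite /w /B -trmx_mul h linearZ. Qed.
Lemma wt : w *m t = n%:R *: w.
Proof. by rewrite Tsum mulmxDr wh1 wh2 -scalerDl natrD. Qed.
Lemma we3 : w *m e3 = 0.
Proof. by rewrite -R19 mulmxBr !mulmxA we1 we2 !mul0mx subrr. Qed.

Fixpoint G k : 'M[C]_d := if k is k'.+1 then (G k' *m f1 + G k' *m f2)%MS else <<w>>%MS.
Fixpoint Sk k : 'M[C]_d := if k is k'.+1 then (Sk k' + G k)%MS else G 0.

Lemma eig_step (A : 'M[C]_d) f (a delta : C) : (A <= eigenspace t a)%MS ->
  f *m t - t *m f = delta *: f -> (A *m f <= eigenspace t (a + delta))%MS.
Proof.
move=> /eigenspaceP hA /eqP; rewrite subr_eq => /eqP hf; apply/eigenspaceP.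
by rewrite -mulmxA hf mulmxDr -scalemxAr mulmxA hA -scalemxAl -scalerDl addrC.
Qed.

Lemma G_eig k : (G k <= eigenspace t (c k))%MS.
Proof.
elim: k => [|k IH] /=.
  by rewrite genmxE; apply/eigenspaceP; rewrite wt /c subr0.
have -> : c k.+1 = c k + -1 by rewrite /c -natr1; ring.
by rewrite addsmx_sub !eig_step // ?R8 ?R9.
Qed.

Lemma G_Sk i k : (i <= k)%N -> (G i <= Sk k)%MS.
Proof.
elim: k => [|k IH]; first by rewrite leqn0 => /eqP ->.
rewrite leq_eqVlt => /orP [/eqP -> | hi] /=; first exact: addsmxSr.
exact: submx_trans (IH hi) (addsmxSl _ _).
Qed.

Lemma Sk_sub k (M : 'M[C]_d) (X : 'M[C]_d) :
  (forall j, (j <= k)%N -> (G j *m M <= X)%MS) -> (Sk k *m M <= X)%MS.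
Proof.
elim: k => [|k IH] h /=; first exact: (h 0%N).
rewrite addsmxMr addsmx_sub; apply/andP; split; last exact: (h k.+1 (leqnn _)).
by apply: IH => j hj; apply: h; exact: leqW.
Qed.

Lemma Sk_S k : (Sk k <= Sk k.+1)%MS.
Proof. exact: addsmxSl. Qed.

Lemma stab_or k : (k <= \rank (Sk k))%N \/ exists k0, (G k0.+1 <= Sk k0)%MS.
Proof.
elim: k => [|k [IH|IH]]; [by left | | by right].
case hk: (G k.+1 <= Sk k)%MS; first by right; exists k.
left; apply: leq_ltn_trans IH _; apply: rank_ltmx.
by rewrite ltmxE /= addsmxSl /= addsmx_sub submx_refl hk.
Qed.

Lemma stab : exists k0, (G k0.+1 <= Sk k0)%MS.
Proof.
case: (stab_or d.+1) => // h; exfalso.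
by move: (leq_trans h (rank_leq_col _)); rewrite ltnn.
Qed.


Lemma stepH (A : 'M[C]_d) f h (delta : C) : (A *m h <= A)%MS ->
  f *m h - h *m f = delta *: f -> (A *m f *m h <= A *m f)%MS.
Proof.
move=> hA /eqP; rewrite subr_eq => /eqP hf.
rewrite -mulmxA hf mulmxDr -scalemxAr mulmxA addrC.
by rewrite addmx_sub ?scalemx_sub ?submxMr.
Qed.

Lemma stepE (A S : 'M[C]_d) e f N (cc : C) : (A *m e <= S)%MS -> (A *m N <= S)%MS ->
  (S *m f <= S)%MS -> f *m e - e *m f = cc *: N -> (A *m f *m e <= S)%MS.
Proof.
move=> hAe hAN hS /eqP; rewrite subr_eq => /eqP hf.
rewrite -mulmxA hf mulmxDr -scalemxAr mulmxA.
rewrite addmx_sub ?scalemx_sub //.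
exact: submx_trans (submxMr _ hAe) hS.
Qed.

Lemma genw_mul (M : 'M[C]_d) : (<<w>> *m M :=: w *m M)%MS.
Proof. exact: eqmxMr (genmxE w). Qed.

Lemma GH h (a : C) : w *m h = a *: w ->
  f1 *m h - h *m f1 = -(2%:R) *: f1 \/ f1 *m h - h *m f1 = 1 *: f1 ->
  f2 *m h - h *m f2 = -(2%:R) *: f2 \/ f2 *m h - h *m f2 = 1 *: f2 ->
  forall j, (G j *m h <= G j)%MS.
Proof.
move=> hw hf1 hf2; elim=> [|j IH] /=.
  by rewrite genw_mul genmxE hw scalemx_sub.
rewrite addsmxMr addsmx_sub; apply/andP; split.
  apply: submx_trans (addsmxSl _ _).
  by case: hf1 => hf1; apply: stepH IH hf1.
apply: submx_trans (addsmxSr _ _).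
by case: hf2 => hf2; apply: stepH IH hf2.
Qed.

Lemma GH1 j : (G j *m h1 <= G j)%MS.
Proof. by apply: (GH wh1); [left; exact: R4 | right; exact: R11]. Qed.
Lemma GH2 j : (G j *m h2 <= G j)%MS.
Proof. by apply: (GH wh2); [right; exact: R10 | left; exact: R5]. Qed.

Section Stab.
Variable k0 : nat.
Hypothesis hk0 : (G k0.+1 <= Sk k0)%MS.
Let S := Sk k0.

Lemma SS1 : (Sk k0.+1 <= S)%MS.
Proof. by rewrite /= addsmx_sub submx_refl hk0. Qed.

Lemma SF f : (forall j, (G j *m f <= G j.+1)%MS) -> (S *m f <= S)%MS.
Proof.
move=> hf; apply: Sk_sub => j hj; apply: submx_trans (hf j) _.
apply: submx_trans SS1; exact: G_Sk.
Qed.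
Lemma SF1 : (S *m f1 <= S)%MS. Proof. by apply: SF => j; apply: addsmxSl. Qed.
Lemma SF2 : (S *m f2 <= S)%MS. Proof. by apply: SF => j; apply: addsmxSr. Qed.

Lemma G_S j : (G j <= S)%MS.
Proof.
elim: j => [|j IH]; first exact: G_Sk.
rewrite /= addsmx_sub; apply/andP; split.
  exact: submx_trans (submxMr _ IH) SF1.
exact: submx_trans (submxMr _ IH) SF2.
Qed.

Lemma SH1 : (S *m h1 <= S)%MS.
Proof. by apply: Sk_sub => j _; apply: submx_trans (GH1 j) (G_S j). Qed.
Lemma SH2 : (S *m h2 <= S)%MS.
Proof. by apply: Sk_sub => j _; apply: submx_trans (GH2 j) (G_S j). Qed.

Lemma GE1 j : (G j *m e1 <= S)%MS.
Proof.
elim: j => [|j IH] /=.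
  by rewrite genw_mul we1 sub0mx.
rewrite addsmxMr addsmx_sub; apply/andP; split.
  apply: (stepE IH _ SF1 R1); exact: submx_trans (GH1 j) (G_S j).
by apply: (stepE IH IH SF2 R17).
Qed.

Lemma GE2 j : (G j *m e2 <= S)%MS.
Proof.
elim: j => [|j IH] /=.
  by rewrite genw_mul we2 sub0mx.
rewrite addsmxMr addsmx_sub; apply/andP; split.
  by apply: (stepE IH IH SF1 R15).
apply: (stepE IH _ SF2 R2); exact: submx_trans (GH2 j) (G_S j).
Qed.

Definition inv_ (M : 'M[C]_d) := (S *m M <= S)%MS.
Lemma invD M N : inv_ M -> inv_ N -> inv_ (M + N).
Proof. by move=> hM hN; rewrite /inv_ mulmxDr addmx_sub. Qed.
Lemma invZ a M : inv_ M -> inv_ (a *: M).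
Proof. by move=> hM; rewrite /inv_ -scalemxAr scalemx_sub. Qed.
Lemma invM M N : inv_ M -> inv_ N -> inv_ (M *m N).
Proof. by move=> hM hN; rewrite /inv_ mulmxA; apply: submx_trans (submxMr _ hM) hN. Qed.
Lemma invB M N : inv_ M -> inv_ N -> inv_ (M - N).
Proof. by move=> hM hN; rewrite -scaleN1r; apply: invD => //; apply: invZ. Qed.

Lemma S_inv X : \tr X = 0 -> (S *m (rho X)^T <= S)%MS.
Proof.
move=> trX; rewrite -/(B X) Bdecomp //.
have i1 : inv_ e1 by apply: Sk_sub => j _; apply: GE1.
have i2 : inv_ e2 by apply: Sk_sub => j _; apply: GE2.
have i3 : inv_ e3 by rewrite -R19; apply: invB; apply: invM.
have i4 : inv_ f3 by rewrite -R20; apply: invB; apply: invM; [exact: SF1|exact: SF2|exact: SF2|exact: SF1].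
by repeat apply: invD; apply: invZ => //; [exact: SF1 | exact: SF2 | exact: SH1 | exact: SH2].
Qed.

Lemma S_full : row_full S.
Proof.
case: hirr => _ /(_ S S_inv) [h0|hd]; last by rewrite /row_full hd.
exfalso; move/eqP: h0; rewrite mxrank_eq0 => /eqP S0.
have := G_S 0; rewrite /= genmxE S0 submx0 => /eqP w0.
by move: w_nz; rewrite w0 eqxx.
Qed.

End Stab.

Fixpoint Pm k : 'M[C]_d := if k is k'.+1 then (t - (c k')%:M) *m Pm k' else 1%:M.

Lemma G_P K i : (i < K)%N -> G i *m Pm K = 0.
Proof.
elim: K i => // K IH i; rewrite ltnS leq_eqVlt => /orP [/eqP -> | hi] /=.
  by rewrite mulmxA mulmxBr mul_mx_scalar; move/eigenspaceP: (G_eig K) => ->;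
     rewrite subrr mul0mx.
rewrite mulmxA mulmxBr mul_mx_scalar; move/eigenspaceP: (G_eig i) => ->.
by rewrite -scalerBl -scalemxAl IH // scaler0.
Qed.

Lemma u_P r (u : 'rV[C]_d) : u *m t = r *: u ->
  forall K, u *m Pm K = (\prod_(i < K) (r - c i)) *: u.
Proof.
move=> hu; elim=> [|K IH] /=; first by rewrite big_ord0 scale1r mulmx1.
rewrite mulmxA mulmxBr mul_mx_scalar hu -scalerBl -scalemxAl IH scalerA.
by rewrite big_ord_recr /= mulrC.
Qed.

Lemma eig_formK : exists K, forall r (u : 'rV[C]_d), u != 0 -> u *m t = r *: u ->
  exists i, (i < K)%N /\ r = c i.
Proof.
have [k0 hk0] := stab.
have P0 : Pm k0.+1 = 0.
  have h1 : (1%:M <= Sk k0)%MS by apply: submx_full; exact: S_full hk0.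
  have h2 : (Sk k0 *m Pm k0.+1 <= (0 : 'M[C]_d))%MS.
    by apply: Sk_sub => j hj; rewrite G_P // sub0mx.
  by move: (submx_trans (submxMr _ h1) h2); rewrite mul1mx submx0 => /eqP.
exists k0.+1 => r u unz hu.
have := u_P hu k0.+1; rewrite P0 mulmx0 => /esym /eqP.
rewrite scaler_eq0 (negbTE unz) orbF => /prodf_eq0 [i _].
by rewrite subr_eq0 => /eqP ->; exists i.
Qed.



Lemma eig_lb r (u : 'rV[C]_d) : u != 0 -> u *m t = r *: u ->
  exists i, (i <= 2 * n)%N /\ r = c i.
Proof.
move=> unz hu; have [K hK] := eig_formK.
have [i0 [_ er]] := hK r u unz hu; subst r.
exists i0; split => //.
pose x j := itr f3 j u.
have xt j : x j *m t = (c i0 + j%:R * -(2%:R)) *: x j := shift_eig hu R6 j.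
have xK : ~~ (x K != 0).
  apply/negP => xnz; have [i [hi e]] := hK _ _ xnz (xt K).
  have : i = (i0 + 2 * K)%N.
    by apply: natC_inj; apply: (eq_via e); rewrite /c !natrD ?natrM; ring.
  by move=> ei; rewrite ei in hi; lia.
have [j [xj xj1]] := @last_true (fun j => x j != 0) K unz xK.
move: xj1; rewrite negbK /x itrS -/(x j) => /eqP yf.
set y := x j in xj yf; set mu := c i0 + j%:R * -(2%:R).
have yt : y *m t = mu *: y := xt j.
have hfe : e3 *m f3 - f3 *m e3 = - t by rewrite -R3 opprB.
have hfh : e3 *m - t - - t *m e3 = -(2%:R) *: e3.
  by rewrite mulmxN mulNmx opprK addrC -opprB R7 scaleNr.
have ynt : y *m - t = - mu *: y by rewrite mulmxN yt scaleNr.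
have lad := ladder hfe hfh yf ynt.
pose z k := itr e3 k y.
have zt k : z k *m t = (mu + k%:R * 2%:R) *: z k := shift_eig yt R7 k.
pose i' := (i0 + 2 * j)%N.
have zK : ~~ (z i'.+1 != 0).
  apply/negP => znz; have [i [_ e]] := hK _ _ znz (zt i'.+1).
  have : (i + 2 * i'.+1)%N = i' .
    by apply: natC_inj; apply: (eq_via e); rewrite /mu /c /i' !natrD ?natrM; ring.
  lia.
have [k [zk zk1]] := @last_true (fun k => z k != 0) i'.+1 xj zK.
move: zk1; rewrite negbK => /eqP zk1.
have := lad k; rewrite -/(z k.+1) -/(z k) zk1 mul0mx => /esym /eqP.
rewrite scaler_eq0 (negbTE zk) orbF mulf_eq0 pnatr_eq0 /= => /eqP B.
have [i [_ A]] := hK _ _ zk (zt k).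
have eB : (n + k)%N = (i0 + 2 * j)%N.
  by apply: natC_inj; apply: (eq_via (esym B)); rewrite /mu /c !natrD ?natrM; ring.
have eA : (i + 2 * k)%N = (i0 + 2 * j)%N.
  by apply: natC_inj; apply: (eq_via A); rewrite /mu /c !natrD ?natrM; ring.
lia.
Qed.


Lemma dim_bound : (n1 = 0 \/ n2 = 0)%N -> ((n./2).+1 * (n./2).+1 <= d)%N.
Proof.
case=> hn.
  have wh1' : w *m h1 = 0 *: w by rewrite wh1 hn.
  have wh2' : w *m h2 = n%:R *: w by rewrite wh2 /n hn.
  exact: (dimlb R2 R5 R11 R9 R17 R16 R3 R6 R13 R12 w_nz we2 we1 we3 wh2' wh1' wt).
have wh1' : w *m h1 = n%:R *: w by rewrite wh1 /n hn addn0.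
have wh2' : w *m h2 = 0 *: w by rewrite wh2 hn.
exact: (dimlb R1 R4 R10 R8 R15 R14 R3 R6 R12 R13 w_nz we1 we2 we3 wh1' wh2' wt).
Qed.

Lemma root_eig (z : C) : root (char_poly (rho (Tmx R))) z ->
  exists i, (i <= 2 * n)%N /\ z = c i.
Proof.
rewrite -char_poly_tr -eigenvalue_root_char => /eigenvalueP [u hu unz].
exact: eig_lb unz hu.
Qed.

Lemma c_rc i : c i = rc (n%:R - i%:R).
Proof. by rewrite rcE rmorphB /= !rmorph_nat. Qed.

Lemma rc_inj : injective (@rc R).
Proof. by move=> x y [] . Qed.

Lemma spec_bound s : real_eigenvalue_list (rho (Tmx R)) s ->
  size s = d /\ forall x, x \in s -> exists i, (i <= 2 * n)%N /\ x = n%:R - i%:R.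
Proof.
move=> [_ hs]; split.
  by have := size_char_poly (rho (Tmx R)); rewrite hs size_prod_XsubC => -[].
move=> x xs; have : root (char_poly (rho (Tmx R))) (rc x).
  by rewrite hs -(big_map (@rc R) xpredT (fun z => 'X - z%:P)) root_prod_XsubC map_f.
by move/root_eig => [i [hi e]]; exists i; split => //; apply: rc_inj; rewrite e c_rc.
Qed.

Lemma spec_exists : exists s, real_eigenvalue_list (rho (Tmx R)) s.
Proof.
have [r hr] := closed_field_poly_normal (char_poly (rho (Tmx R))).
rewrite (monicP (char_poly_monic _)) scale1r in hr.
have hreal : forall z, z \in r -> rc (complex.Re z) = z.
  move=> z zr; have : root (char_poly (rho (Tmx R))) z.
    by rewrite hr root_prod_XsubC.
  by move/root_eig => [i [_ ->]]; rewrite c_rc.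
exists (sort <=%R (map (@complex.Re R) r)); split; first exact: sort_le_sorted.
rewrite hr (perm_big _ (permEl (perm_sort _ _))) /= big_map.
by apply: eq_big_seq => z zr; rewrite hreal.
Qed.


Lemma ks_rep : (n1 = 0 \/ n2 = 0)%N ->
  0 <= ks_dist (nnd_cdf (eigs (rho (Tmx R)))) (@dirac0_cdf R) <= (2 * n + 1)%:R / d%:R
  /\ ((n./2).+1 * (n./2).+1 <= d)%N.
Proof.
move=> hb; have hd := dim_bound hb; split => //.
have [s0 hs0] := spec_exists.
have hs : real_eigenvalue_list (rho (Tmx R)) (eigs (rho (Tmx R))).
  rewrite /eigs; case: pselect => [h|h]; first exact: (proj2_sig (cid h)).
  by exfalso; apply: h; exists s0.
have [hsz hin] := spec_bound hs.
apply: ks_le => x x0.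
have hpos : (0 < size (eigs (rho (Tmx R))))%N by rewrite hsz; apply: leq_trans hd.
by have := nnd_bound hs.1 hpos hin x0; rewrite hsz.
Qed.

End Rep.
Lemma final_ineq (R : realType) (n m q D : nat) : (m <= n)%N -> (n + 1 <= 2 * q)%N ->
  (0 < q)%N -> (q * q <= D)%N -> (2 * n + 1)%:R / D%:R <= 8 / (m.+1)%:R :> R.
Proof.
move=> hmn hnq q0 hqD.
have D0 : (0 < D)%N by apply: leq_trans hqD; rewrite muln_gt0 q0.
rewrite ler_pdivrMr ?ltr0n // mulrAC ler_pdivlMr ?ltr0n //.
have -> : (8 : R) = 8%:R by [].
rewrite -!natrM ler_nat.
apply: (@leq_trans (8 * (q * q))); last by rewrite leq_mul2l.
nia.
Qed.

Lemma half_bound (n : nat) : (n + 1 <= 2 * (n./2).+1)%N.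
Proof.
have h := odd_double_half n; rewrite -muln2 in h.
move: h; case: (odd n) => /= h; lia.
Qed.

Unset Implicit Arguments.

Theorem mainTheorem4 (R : realType) (l1 l2 : nat)
  (hborder : l1 = 0%N \/ l2 = 0%N) (hnontriv : (l1, l2) <> (0%N, 0%N))
  (d : nat -> nat) (rho : forall m : nat, 'M[complex R]_3 -> 'M[complex R]_(d m))
  (hrho : forall m : nat, irrep_hw (rho m) (m * l1)%N (m * l2)%N) :
  (fun m : nat => ks_dist (nnd_cdf (eigs (rho m (Tmx R)))) (@dirac0_cdf R))
    @ \oo --> (0 : R).
Proof.
have hl : (0 < l1 + l2)%N.
  rewrite lt0n; apply/eqP => h; apply: hnontriv.
  by move/eqP: h; rewrite addn_eq0 => /andP [/eqP -> /eqP ->].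
set f := fun m => _.
have hb m : 0 <= f m <= 8 / (m.+1)%:R.
  have [[hlin hbr] [hirr [v hv]]] := hrho m.
  have hb0 : (m * l1 = 0 \/ m * l2 = 0)%N.
    by case: hborder => ->; rewrite muln0; [left|right].
  have [/andP [h0 h1] hd] := ks_rep hlin hbr hv hirr hb0.
  rewrite /f h0 /=; apply: le_trans h1 _.
  apply: final_ineq hd; [rewrite -mulnDr; exact: leq_pmulr | exact: half_bound | by []].
apply: (@squeeze_cvgr _ _ _ _ (fun=> 0) (fun m => 8 * harmonic m)).
  by apply: nearW => m /=; exact: hb m.
  exact: cvg_cst.
rewrite -(mulr0 (8 : R)); apply: cvgM; [exact: cvg_cst | exact: cvg_harmonic].
Qed.
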